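(* Let $$N=\begin{pmatrix}2&1&0&0&1&2\\1&2&2&1&0&0\\0&0&1&2&2&1\end{pmatrix},\qquad M=\begin{pmatrix}3&3&2&1&1&2\\2&1&1&2&3&3\end{pmatrix},$$ and let $\phi:K[x_1,\dots,x_6]\to K[t_1,t_2,t_3]$, $x_i\mapsto \mathbf t^{\mathbf b_i}$ ($\mathbf b_i$ the columns of $N$). Then $I_N\subseteq I_M$, and $\mathrm{rad}((\phi(I_M))^e)=\mathrm{rad}(\phi(x_3^3-x_1x_2),\phi(x_4^3-x_5x_6))$, but $I_M\neq \mathrm{rad}(I_N+(x_3^3-x_1x_2,\;x_4^3-x_5x_6))$ (no power of $x_6^2-x_3x_4x_5\in I_M$ lies in $I_N+(x_3^3-x_1x_2,x_4^3-x_5x_6)$). In particular, the hypothesis $\Gamma(N)=V(I_N)$ cannot be dropped from Theorem 3.1 (and indeed $\Gamma(N)\ne V(I_N)$ here).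
   Context: $K$ is a field. For an integer matrix $M$ with columns $\mathbf a_i$, the toric ideal $I_M\subseteq K[x_1,\dots,x_n]$ is the kernel of $x_i\mapsto\mathbf t^{\mathbf a_i}$ into a Laurent polynomial ring. $(\phi(I_M))^e$ is the ideal of $K[t_1,t_2,t_3]$ generated by $\phi(I_M)$. $\Gamma(N)=\{(\mathbf T^{\mathbf b_1},\dots,\mathbf T^{\mathbf b_n}):\mathbf T\in\bar K^3\}$ and $V(I_N)$ is the zero set of $I_N$ in $\bar K^6$. Theorem 3.1 states: if $N$ has non-negative entries, $I_N\subseteq I_M$ and $\Gamma(N)=V(I_N)$, then for $f_1,\dots,f_s\in I_M$, $I_M=\mathrm{rad}(I_N+(f_1,\dots,f_s))$ iff $\mathrm{rad}((\phi(I_M))^e)=\mathrm{rad}(\phi(f_1),\dots,\phi(f_s))$. *)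

(* Defs.v *)
From HB Require Import structures.
From mathcomp Require Import all_boot all_algebra.
From mathcomp Require Import mpoly.
Set Implicit Arguments. Unset Strict Implicit. Unset Printing Implicit Defensive.
Import GRing.Theory.
Local Open Scope ring_scope.

Definition ideal_gen (K : fieldType) (n : nat) (S : {mpoly K[n]} -> Prop)
  : {mpoly K[n]} -> Prop :=
  fun p => exists s : seq ({mpoly K[n]} * {mpoly K[n]}),
    (forall c, c \in s -> S c.2) /\ p = \sum_(c <- s) c.1 * c.2.

Definition mrad (K : fieldType) (n : nat) (I : {mpoly K[n]} -> Prop)
  : {mpoly K[n]} -> Prop :=
  fun p => exists k : nat, I (p ^+ k).

Definition set_eq (T : Type) (A B : T -> Prop) := forall x, A x <-> B x.
Definition incl_set (T : Type) (A B : T -> Prop) := forall x, A x -> B x.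

Definition col_monomial (K : fieldType) (d n : nat) (A : 'M[nat]_(d, n))
  (i : 'I_n) : {mpoly K[d]} :=
  'X_[ [multinom A j i | j < d] ].

Definition monomial_map (K : fieldType) (d n : nat) (A : 'M[nat]_(d, n))
  (p : {mpoly K[n]}) : {mpoly K[d]} :=
  p \mPo [tuple @col_monomial K d n A i | i < n].

(* Toric ideal I_A: kernel of the monomial map.  Since A has non-negative
   entries, the image lies in the polynomial ring K[t], which embeds in the
   Laurent ring, so the kernel is the same. *)
Definition toric_ideal (K : fieldType) (d n : nat) (A : 'M[nat]_(d, n))
  : {mpoly K[n]} -> Prop :=
  fun p => @monomial_map K d n A p = 0.

Definition image_set (T U : Type) (f : T -> U) (S : T -> Prop) : U -> Prop :=
  fun u => exists t, S t /\ u = f t.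

Definition Gamma (L : fieldType) (d n : nat) (A : 'M[nat]_(d, n))
  : ('I_n -> L) -> Prop :=
  fun x => exists T : 'I_d -> L, forall i : 'I_n, x i = \prod_(j < d) T j ^+ A j i.

Definition zero_set (K L : fieldType) (iota : {rmorphism K -> L}) (n : nat)
  (I : {mpoly K[n]} -> Prop) : ('I_n -> L) -> Prop :=
  fun x => forall p, I p -> (map_mpoly iota p).@[x] = 0.

Definition mat_of_lists (d n : nat) (l : seq (seq nat)) : 'M[nat]_(d, n) :=
  \matrix_(i < d, j < n) nth 0%N (nth [::] l i) j.

Definition Nmat : 'M[nat]_(3, 6) :=
  mat_of_lists 3 6 [:: [:: 2; 1; 0; 0; 1; 2];
                       [:: 1; 2; 2; 1; 0; 0];
                       [:: 0; 0; 1; 2; 2; 1] ]%N.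

Definition Mmat : 'M[nat]_(2, 6) :=
  mat_of_lists 2 6 [:: [:: 3; 3; 2; 1; 1; 2];
                       [:: 2; 1; 1; 2; 3; 3] ]%N.

(* x_k (1-based, k = 1..6) in K[x_1..x_6]. *)
Definition xv (K : fieldType) (k : nat) : {mpoly K[6]} := 'X_(@inord 5 k.-1).

Definition f1 (K : fieldType) : {mpoly K[6]} := xv K 3 ^+ 3 - xv K 1 * xv K 2.
Definition f2 (K : fieldType) : {mpoly K[6]} := xv K 4 ^+ 3 - xv K 5 * xv K 6.
Definition g6 (K : fieldType) : {mpoly K[6]} := xv K 6 ^+ 2 - xv K 3 * xv K 4 * xv K 5.

(* Main.v *)
Require Import Defs.
From HB Require Import structures.
From mathcomp Require Import all_boot all_algebra.
From mathcomp Require Import mpoly zify ring bigenough.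
From mathcomp Require Import ssrcomplements.
Import BigEnough.
Import GRing.Theory.
Local Open Scope ring_scope.
Section Lin.
Variables (K : fieldType) (n : nat) (V : lmodType K) (F : 'X_{1..n} -> V).
Definition lin (p : {mpoly K[n]}) : V := \sum_(m <- msupp p) p@_m *: F m.

Lemma linE p w : (msize p <= w)%N -> lin p = \sum_(m : 'X_{1..n < w}) p@_m *: F m.
Proof.
move=> le_pi; set I : subFinType _ := 'X_{1..n < w}.
rewrite /lin (big_mksub I) ?msupp_uniq //=; first last.
  by move=> x /msize_mdeg_lt /leq_trans; apply.
rewrite big_rmcond //= => j /memN_msupp_eq0 ->.
by rewrite scale0r.
Qed.

Lemma linD p q : lin (p + q) = lin p + lin q.
Proof.
pose_big_enough i.
  rewrite !(@linE _ i) // -big_split; apply/eq_bigr.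
  by move=> m _; rewrite mcoeffD scalerDl.
by close.
Qed.

Lemma linZ c p : lin (c *: p) = c *: lin p.
Proof.
pose_big_enough i.
  rewrite !(@linE _ i) // scaler_sumr; apply/eq_bigr.
  by move=> m _; rewrite mcoeffZ scalerA.
by close.
Qed.

Lemma lin0 : lin 0 = 0.
Proof. by rewrite /lin msupp0 big_nil. Qed.

Lemma linX m : lin 'X_[m] = F m.
Proof. by rewrite /lin msuppX big_seq1 mcoeffX eqxx scale1r. Qed.

Lemma lin_sum (I : Type) (s : seq I) (G : I -> {mpoly K[n]}) :
  lin (\sum_(c <- s) G c) = \sum_(c <- s) lin (G c).
Proof.
elim: s => [|a s IH]; first by rewrite !big_nil lin0.
by rewrite !big_cons linD IH.
Qed.
End Lin.

Definition Bu {d n : nat} (A : 'M[nat]_(d, n)) (u : 'X_{1..n}) : 'X_{1..d} :=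
  [multinom (\sum_(i < n) A j i * u i)%N | j < d].

Lemma colX (K : fieldType) d n (A : 'M[nat]_(d, n)) i :
  @col_monomial K d n A i = \prod_(j < d) 'X_j ^+ A j i.
Proof. by rewrite /col_monomial mpolyXE_id; apply eq_bigr => j _; rewrite mnmE. Qed.

Lemma compX (K : fieldType) d n (A : 'M[nat]_(d, n)) u :
  'X_[u] \mPo [tuple @col_monomial K d n A i | i < n] = 'X_[(Bu A u)].
Proof.
rewrite comp_mpolyX [RHS]mpolyXE_id.
under eq_bigr => i _ do rewrite tnth_mktuple colX -prodrXl.
under eq_bigr => i _ do under eq_bigr => j _ do rewrite -exprM.
rewrite exchange_big /=; apply eq_bigr => j _.
by rewrite prodrXr mnmE.
Qed.

Lemma mmapE_sum (K : fieldType) d n (A : 'M[nat]_(d, n)) p :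
  @monomial_map K d n A p = \sum_(u <- msupp p) p@_u *: 'X_[(Bu A u)].
Proof.
rewrite /monomial_map comp_mpolyEX; apply eq_bigr => u _; by rewrite compX.
Qed.
Notation i31 := (lift ord0 ord0 : 'I_3).
Notation i32 := (lift ord0 (lift ord0 ord0) : 'I_3).
Notation i21 := (lift ord0 ord0 : 'I_2).
Ltac bexp := rewrite /Bu ?mnmE !big_ord_recl !big_ord0 !mxE /=.

Lemma factA u : Bu Mmat u ord0 = (Bu Nmat u ord0 + Bu Nmat u i31)%N /\
                Bu Mmat u i21 = (Bu Nmat u ord0 + Bu Nmat u i32)%N.
Proof. bexp; split; lia. Qed.
Lemma factB u : ((Bu Mmat u ord0 + Bu Mmat u i21) %% 3 = Bu Nmat u ord0 %% 3)%N.
Proof. bexp. lia. Qed.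
Lemma factC u : Bu Nmat u i31 = 0%N -> Bu Nmat u i32 = 0%N -> Bu Nmat u ord0 = 0%N.
Proof. bexp. lia. Qed.

Section Key.
Variable K : fieldType.
Local Notation T0 := ('X_ord0 : {mpoly K[3]}).
Local Notation T1 := ('X_i31 : {mpoly K[3]}).
Local Notation T2 := ('X_i32 : {mpoly K[3]}).

Lemma X3 (m : 'X_{1..3}) : 'X_[m] = T0 ^+ m ord0 * T1 ^+ m i31 * T2 ^+ m i32 :> {mpoly K[3]}.
Proof. by rewrite mpolyXE_id !big_ord_recl big_ord0 mulr1 mulrA. Qed.

Definition hh : {mpoly K[3]} := (T1 * T2) ^+ 3 - T0 ^+ 3.

Definition Th (v : 'X_{1..2}) : {mpoly K[3]} :=
  let r := ((v ord0 + v i21) %% 3)%N in T0 ^+ r * T1 ^+ (v ord0 - r) * T2 ^+ (v i21 - r).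

Definition SS (j : nat) : {mpoly K[3]} :=
  \sum_(i < j) ((T1 * T2) ^+ 3) ^+ (j.-1 - i) * (T0 ^+ 3) ^+ i.

Definition AA (u : 'X_{1..6}) : {mpoly K[3]} :=
  let b := Bu Nmat u in
  if (0 < b i31)%N then T0 ^+ (b ord0 %% 3) * T1 ^+ (b i31).-1 * T2 ^+ b i32 * SS (b ord0 %/ 3)
  else 0.
Definition BB (u : 'X_{1..6}) : {mpoly K[3]} :=
  let b := Bu Nmat u in
  if (0 < b i31)%N then 0
  else T0 ^+ (b ord0 %% 3) * T2 ^+ (b i32).-1 * SS (b ord0 %/ 3).

Lemma ABsplit u : T1 * AA u + T2 * BB u =
  let b := Bu Nmat u in T0 ^+ (b ord0 %% 3) * T1 ^+ b i31 * T2 ^+ b i32 * SS (b ord0 %/ 3).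
Proof.
rewrite /AA /BB /=.
have := @factC u; move: (Bu Nmat u) => b Hc.
case: ifP => H1.
  rewrite mulr0 addr0 -(prednK H1) exprS; ring.
have E1 : b i31 = 0%N by move/negbT: H1; rewrite -leqNgt leqn0 => /eqP.
rewrite E1 expr0 mulr0 add0r.
case H2: (0 < b i32)%N.
  rewrite -(prednK H2) exprS /=; ring.
have E2 : b i32 = 0%N by move/negbT: H2; rewrite -leqNgt leqn0 => /eqP.
have E0 := Hc E1 E2.
by rewrite E2 E0 /SS /= big_ord0 !mulr0.
Qed.

Lemma keymono u : 'X_[Bu Nmat u] = Th (Bu Mmat u) - hh * (T1 * AA u + T2 * BB u).
Proof.
rewrite ABsplit /= X3 /Th factB.
have [EA EB] := factA u.
rewrite EA EB /hh.
move: (Bu Nmat u ord0) (Bu Nmat u i31) (Bu Nmat u i32) => b0 b1 b2.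
have Eb := divn_eq b0 3.
move: (b0 %/ 3)%N (b0 %% 3)%N Eb => j r Eb.
have -> : (b0 + b1 - r = b1 + j * 3)%N by lia.
have -> : (b0 + b2 - r = b2 + j * 3)%N by lia.
rewrite {1}Eb.
have HS : (T1 ^+ 3) ^+ j * (T2 ^+ 3) ^+ j - (T0 ^+ 3) ^+ j = ((T1 * T2) ^+ 3 - T0 ^+ 3) * SS j.
  by rewrite -exprMn -exprMn subrXX.
rewrite !exprD !(mulnC j) !exprM.
move: HS; rewrite /SS; move: (\sum_(i < j) _) => S.
move: ((T0 ^+ 3) ^+ j) ((T1 ^+ 3) ^+ j) ((T2 ^+ 3) ^+ j) => Y X1 X2 HS.
have -> : Y = X1 * X2 - ((T1 * T2) ^+ 3 - T0 ^+ 3) * S by rewrite -HS; ring.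
ring.
Qed.

Lemma scal_split (s : seq 'X_{1..6}) (c : 'X_{1..6} -> K) (a x y : 'X_{1..6} -> {mpoly K[3]}) :
  \sum_(u <- s) c u *: (a u - hh * (T1 * x u + T2 * y u)) =
  \sum_(u <- s) c u *: a u - hh * (T1 * \sum_(u <- s) c u *: x u + T2 * \sum_(u <- s) c u *: y u).
Proof.
elim: s => [|v s IH]; first by rewrite !big_nil; ring.
rewrite !big_cons IH.
move: (\sum_(u <- s) c u *: a u) (\sum_(u <- s) c u *: x u) (\sum_(u <- s) c u *: y u) => A X Y.
rewrite -!mul_mpolyC; ring.
Qed.

Lemma linTh_zero p : @toric_ideal K 2 6 Mmat p ->
  \sum_(u <- msupp p) p@_u *: Th (Bu Mmat u) = 0.
Proof.
move=> H.
have : @lin K 2 _ Th (@monomial_map K 2 6 Mmat p) = 0 by rewrite H lin0.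
rewrite mmapE_sum lin_sum.
by under eq_bigr do rewrite linZ linX.
Qed.

Lemma keyIM p : @toric_ideal K 2 6 Mmat p ->
  exists A B, @monomial_map K 3 6 Nmat p = hh * (T1 * A + T2 * B).
Proof.
move=> H; exists (- \sum_(u <- msupp p) p@_u *: AA u), (- \sum_(u <- msupp p) p@_u *: BB u).
rewrite mmapE_sum.
under eq_bigr do rewrite keymono.
rewrite scal_split linTh_zero //.
move: (\sum_(u <- msupp p) p@_u *: AA u) (\sum_(u <- msupp p) p@_u *: BB u) => A B.
ring.
Qed.

Lemma sum_form (s : seq ({mpoly K[3]} * {mpoly K[3]})) :
  (forall c, c \in s -> image_set (@monomial_map K 3 6 Nmat) (@toric_ideal K 2 6 Mmat) c.2) ->
  exists A B, \sum_(c <- s) c.1 * c.2 = hh * (T1 * A + T2 * B).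
Proof.
elim: s => [|a s IH] Hs.
  by exists 0, 0; rewrite big_nil; ring.
have [A [B E]] : exists A B, \sum_(c <- s) c.1 * c.2 = hh * (T1 * A + T2 * B).
  by apply: IH => c hc; apply: Hs; rewrite inE hc orbT.
have [t [Ht Et]] := Hs a (mem_head a s).
have [A1 [B1 E1]] := keyIM t Ht.
exists (a.1 * A1 + A), (a.1 * B1 + B).
rewrite big_cons E Et E1; ring.
Qed.

Lemma mm_xv d (A : 'M[nat]_(d,6)) k :
  (xv K k.+1) \mPo [tuple @col_monomial K d 6 A i | i < 6] = @col_monomial K d 6 A (inord k).
Proof. by rewrite /xv /= comp_mpolyXU -tnth_nth tnth_mktuple. Qed.

Lemma phif1 : @monomial_map K 3 6 Nmat (f1 K) = T1 ^+ 3 * hh.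
Proof.
rewrite /f1 /monomial_map rmorphB !rmorphM /= !mm_xv !colX.
rewrite !big_ord_recl !big_ord0 !mxE /= !inordK //= /hh.
ring.
Qed.

Lemma phif2 : @monomial_map K 3 6 Nmat (f2 K) = T2 ^+ 3 * hh.
Proof.
rewrite /f2 /monomial_map rmorphB !rmorphM /= !mm_xv !colX.
rewrite !big_ord_recl !big_ord0 !mxE /= !inordK //= /hh.
ring.
Qed.

Lemma psiX u : 'X_[Bu Nmat u] \mPo [tuple ('X_ord0 * 'X_i21 : {mpoly K[2]}); 'X_ord0; 'X_i21]
   = 'X_[Bu Mmat u].
Proof.
rewrite comp_mpolyX [RHS]mpolyXE_id !big_ord_recl !big_ord0 /=.
have [EA EB] := factA u.
rewrite EA EB.
move: (Bu Nmat u ord0) (Bu Nmat u i31) (Bu Nmat u i32) => b0 b1 b2.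
rewrite !(tnth_nth 0) /= !exprD exprMn; ring.
Qed.

Lemma part1 p : @toric_ideal K 3 6 Nmat p -> @toric_ideal K 2 6 Mmat p.
Proof.
rewrite /toric_ideal => H.
have : @monomial_map K 2 6 Mmat p =
  (@monomial_map K 3 6 Nmat p) \mPo [tuple ('X_ord0 * 'X_i21 : {mpoly K[2]}); 'X_ord0; 'X_i21].
  rewrite !mmapE_sum raddf_sum /=; apply eq_bigr => u _.
  by rewrite linearZ /= psiX.
by rewrite H comp_mpoly0.
Qed.

Definition e6 (R : nzRingType) : 'I_6 -> R := fun i => if val i == 5%N then 1 else 0.

Lemma e6prod (u : 'X_{1..6}) : \prod_(i < 6) (e6 K i) ^+ u i =
  ((Bu Nmat u i31 == 0%N) && (Bu Nmat u ord0 == 2 * Bu Nmat u i32)%N)%:R.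
Proof.
rewrite /Bu !mnmE !big_ord_recl !big_ord0 !mxE /e6 /= !expr0n expr1n !mulr1.
rewrite -!natrM; congr (_%:R).
move: (u ord0) (u (lift ord0 ord0)) (u (lift ord0 (lift ord0 ord0)))
  (u (lift ord0 (lift ord0 (lift ord0 ord0))))
  (u (lift ord0 (lift ord0 (lift ord0 (lift ord0 ord0)))))
  (u (lift ord0 (lift ord0 (lift ord0 (lift ord0 (lift ord0 ord0)))))) => a b c d e f.
lia.
Qed.

Lemma evIN p : @toric_ideal K 3 6 Nmat p -> p.@[e6 K] = 0.
Proof.
move=> H.
have : @lin K 3 _ (fun m : 'X_{1..3} => (((m i31 == 0%N) && (m ord0 == 2 * m i32)%N)%:R)%:MP : {mpoly K[3]})
   (@monomial_map K 3 6 Nmat p) = 0 by rewrite H lin0.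
rewrite mmapE_sum lin_sum.
under eq_bigr do rewrite linZ linX /= -e6prod -mul_mpolyC -mpolyCM.
rewrite -raddf_sum /= => /eqP; rewrite mpolyC_eq0 => /eqP <-.
by rewrite mevalE.
Qed.

Lemma mevalXn (v : 'I_6 -> K) (p : {mpoly K[6]}) k : (p ^+ k).@[v] = (p.@[v]) ^+ k.
Proof. elim: k => [|k IH]; first by rewrite !expr0 meval1. by rewrite !exprS mevalM IH. Qed.

Lemma ev_xv k : (k < 6)%N -> (xv K k.+1).@[e6 K] = if k == 5%N then 1 else 0.
Proof. by move=> Hk; rewrite /xv mevalXU /e6 /= inordK. Qed.

Lemma evf1 : (f1 K).@[e6 K] = 0.
Proof. by rewrite /f1 mevalB mevalXn mevalM !ev_xv //= expr0n mulr0 subr0. Qed.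
Lemma evf2 : (f2 K).@[e6 K] = 0.
Proof. by rewrite /f2 mevalB mevalXn mevalM !ev_xv //= expr0n mul0r subr0. Qed.
Lemma evg6 : (g6 K).@[e6 K] = 1.
Proof. by rewrite /g6 mevalB mevalXn !mevalM !ev_xv //= expr1n !mul0r subr0. Qed.

Lemma sum_eval0 (v : 'I_6 -> K) (s : seq ({mpoly K[6]} * {mpoly K[6]})) :
  (forall c, c \in s -> c.2.@[v] = 0) -> (\sum_(c <- s) c.1 * c.2).@[v] = 0.
Proof.
elim: s => [|a s IH] Hs; first by rewrite big_nil meval0.
rewrite big_cons mevalD mevalM (Hs a (mem_head _ _)) mulr0 add0r IH //.
by move=> c hc; apply: Hs; rewrite inE hc orbT.
Qed.

Lemma IMX (p : {mpoly K[6]}) : @monomial_map K 2 6 Mmat p = 0 -> @toric_ideal K 2 6 Mmat p.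
Proof. by []. Qed.

Lemma f1IM : @toric_ideal K 2 6 Mmat (f1 K).
Proof.
rewrite /toric_ideal /f1 /monomial_map rmorphB !rmorphM /= !mm_xv !colX.
rewrite !big_ord_recl !big_ord0 !mxE /= !inordK //=.
ring.
Qed.
Lemma f2IM : @toric_ideal K 2 6 Mmat (f2 K).
Proof.
rewrite /toric_ideal /f2 /monomial_map rmorphB !rmorphM /= !mm_xv !colX.
rewrite !big_ord_recl !big_ord0 !mxE /= !inordK //=.
ring.
Qed.
Lemma g6IM : @toric_ideal K 2 6 Mmat (g6 K).
Proof.
rewrite /toric_ideal /g6 /monomial_map rmorphB !rmorphM /= !mm_xv !colX.
rewrite !big_ord_recl !big_ord0 !mxE /= !inordK //=.
ring.
Qed.
End Key.

Lemma meval_map (K L : fieldType) (iota : {rmorphism K -> L}) n (v : 'I_n -> K) (p : {mpoly K[n]}) :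
  (map_mpoly iota p).@[fun i => iota (v i)] = iota (p.@[v]).
Proof.
rewrite !mevalE (perm_big _ (msupp_map_mpoly _ (fmorph_inj iota))) rmorph_sum.
apply eq_bigr => m _; rewrite mcoeff_map_mpoly rmorphM rmorph_prod.
by congr (_ * _); apply eq_bigr => i _; rewrite rmorphXn.
Qed.


Theorem mainTheorem4 (K : fieldType) :
  let I_N := @toric_ideal K 3 6 Nmat in
  let I_M := @toric_ideal K 2 6 Mmat in
  let phi := @monomial_map K 3 6 Nmat in
  let J := ideal_gen (fun p => I_N p \/ p = f1 K \/ p = f2 K) in
  [/\ incl_set I_N I_M,
      set_eq (mrad (ideal_gen (image_set phi I_M)))
             (mrad (ideal_gen (fun q => q = phi (f1 K) \/ q = phi (f2 K)))),
      ~ set_eq I_M (mrad J),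
      I_M (g6 K) /\ (forall k : nat, ~ J (g6 K ^+ k)) &
      forall (L : closedFieldType) (iota : {rmorphism K -> L}),
        ~ set_eq (@Gamma L 3 6 Nmat) (zero_set iota I_N)].
Proof.
cbv zeta.
have part4 : forall k : nat, ~ ideal_gen (fun p => @toric_ideal K 3 6 Nmat p \/ p = f1 K \/ p = f2 K) (g6 K ^+ k).
  move=> k [s [Hs Ex]].
  have : (g6 K ^+ k).@[e6 K] = 0.
    rewrite Ex; apply: sum_eval0 => c /Hs [H|[->|->]].
    - exact: evIN.
    - exact: evf1.
    - exact: evf2.
  by rewrite mevalXn evg6 expr1n => /eqP; rewrite oner_eq0 //.
split.
- move=> p; exact: part1.
- move=> x; split.
  + move=> [k [s [Hs Ex]]].
    have [A [B E]] := @sum_form K s Hs.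
    set a := 'X_(lift ord0 ord0) * A; set b := 'X_(lift ord0 (lift ord0 ord0)) * B.
    exists (k * 5)%N.
    exists [:: (hh K ^+ 4 * A ^+ 3 * (a ^+ 2 + 5%:R * a * b + 10%:R * b ^+ 2), @monomial_map K 3 6 Nmat (f1 K));
               (hh K ^+ 4 * B ^+ 3 * (10%:R * a ^+ 2 + 5%:R * a * b + b ^+ 2), @monomial_map K 3 6 Nmat (f2 K))].
    split.
      by move=> c; rewrite !inE => /orP [/eqP->|/eqP->]; [left|right].
    rewrite !big_cons big_nil /= phif1 phif2 exprM Ex E /a /b; ring.
  + move=> [k [s [Hs Ex]]]; exists k, s; split => // c /Hs [->|->].
    * by exists (f1 K); split => //; apply: f1IM.
    * by exists (f2 K); split => //; apply: f2IM.
- move=> Heq; have [k Hk] := (Heq (g6 K)).1 (g6IM K).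
  exact: (part4 k).
- by split; [apply: g6IM | exact: part4].
- move=> L iota Heq.
  have Z : zero_set iota (@toric_ideal K 3 6 Nmat) (e6 L).
    move=> p Hp.
    rewrite (@meval_eq _ _ (e6 L) (fun i => iota (e6 K i))); last first.
      by move=> i; rewrite /e6; case: ifP => _; rewrite ?rmorph1 ?rmorph0.
    by rewrite meval_map evIN // rmorph0.
  have [T HT] := (Heq (e6 L)).2 Z.
  have h5 := HT (inord 5); have h4 := HT (inord 4).
  rewrite /e6 ?inordK //= !big_ord_recl !big_ord0 !mxE /= ?inordK //= in h5 h4.
  rewrite !expr0 !expr1 !mul1r !mulr1 in h5 h4.
  move/esym/eqP: h4; rewrite mulf_eq0 expf_eq0 /= => /orP [/eqP E|/eqP E];
    move: h5; rewrite E ?expr0n ?mul0r ?mulr0 => /eqP; rewrite oner_eq0 //.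
Qed.
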